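(* Let $P$ be a finite poset and let $P_{\chi} \subseteq P$ be a $\chi$-minimal model of $P$. If $h, h' : P \to \mathbb{Z}$ are functions whose restrictions to $P_{\chi}$ coincide, $h|_{P_\chi} = h'|_{P_\chi}$, then \[ \int_{P} h \, d\chi = \int_{P} h' \, d\chi . \]
   Context: For a finite poset $P$, the zeta function is the $P \times P$ matrix with $\zeta(x,y)=1$ if $x \le y$ and $0$ otherwise; it is invertible, and the Euler characteristic of $P$ is $\chi(P) = \sum_{x,y \in P} \zeta^{-1}(x,y)$ ($\chi(\emptyset)=0$). A filter of $P$ is an upward-closed subset. For a subset $Q$, $\delta_Q$ denotes its indicator function. Every $f : P \to \mathbb{Z}$ can be written as $f = \sum_i a_i \delta_{Q_i}$ with $a_i \in \mathbb{Z}$ and $Q_i$ filters; the Euler calculus of $f$ is $\int_P f\, d\chi = \sum_i a_i \chi(Q_i)$, independent of the representation. A point $x$ of a finite poset $R$ is a $\chi$-point of $R$ if $\chi(R_{>x}) = 1$, where $R_{>x} = \{y \in R \mid y > x\}$. A $\chi$-minimal model of $P$ is a subposet (with the induced order) obtained from $P$ by repeatedly removing one point that is a $\chi$-point of the current subposet, until the current subposet has no $\chi$-points. *)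

(* Defs.v *)
From HB Require Import structures.
From mathcomp Require Import all_boot all_order all_algebra.
From Stdlib Require Import ClassicalEpsilon.
Set Implicit Arguments. Unset Strict Implicit. Unset Printing Implicit Defensive.
Import Order.TTheory GRing.Theory.
Local Open Scope ring_scope.

Section PosetDefs.
Context {d : Order.disp_t} {T : finPOrderType d}.

Definition zeta_mx (Q : {set T}) : 'M[int]_#|Q| :=
  \matrix_(i, j) ((@enum_val T (mem Q) i <= @enum_val T (mem Q) j)%O)%:R.

(* Euler characteristic: sum of all entries of zeta^{-1}; chi(set0) = 0. *)
Definition echi (Q : {set T}) : int :=
  \sum_(i < #|Q|) \sum_(j < #|Q|) (invmx (zeta_mx Q)) i j.

Definition is_filter (Q : {set T}) : Prop :=
  forall x y : T, x \in Q -> (x <= y)%O -> y \in Q.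

(* r = [:: (a_1,Q_1); ...] represents f as sum_i a_i delta_{Q_i}, Q_i filters. *)
Definition filter_rep (f : T -> int) (r : seq (int * {set T})) : Prop :=
  (forall p, p \in r -> is_filter p.2) /\
  forall x : T, f x = \sum_(p <- r) p.1 * (x \in p.2)%:R.

Definition euler_integral (f : T -> int) : int :=
  \sum_(p <- epsilon (inhabits [::]) (filter_rep f)) p.1 * echi p.2.

Definition above (R : {set T}) (x : T) : {set T} := [set y in R | (x < y)%O].

Definition chi_point (R : {set T}) (x : T) : Prop := x \in R /\ echi (above R x) = 1.

Inductive chi_reduces : {set T} -> {set T} -> Prop :=
| chi_red_refl R : chi_reduces R R
| chi_red_step R x S : chi_point R x -> chi_reduces (R :\ x) S -> chi_reduces R S.

Definition chi_minimal_model (S : {set T}) : Prop :=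
  chi_reduces [set: T] S /\ forall x, ~ chi_point S x.

End PosetDefs.

(* Main.v *)
Require Import Defs.
From HB Require Import structures.
From mathcomp Require Import all_boot all_order all_algebra.
From Stdlib Require Import ClassicalEpsilon.
Set Implicit Arguments. Unset Strict Implicit. Unset Printing Implicit Defensive.
Import Order.TTheory GRing.Theory.
Local Open Scope ring_scope.

Section Aux.
Context {d : Order.disp_t} {T : finPOrderType d}.

Lemma min_exists (Q : {set T}) x0 : x0 \in Q ->
  exists m, m \in Q /\ forall y, y \in Q -> (y <= m)%O -> y = m.
Proof.
move=> x0Q.
case: (arg_minnP (fun x => #|[set y in Q | (y < x)%O]|) x0Q) => m mQ mmin.
exists m; split => // y yQ lym.
case: (eqVneq y m) => // neq; exfalso.
have ltym : (y < m)%O by rewrite lt_neqAle neq lym.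
have := mmin y yQ; apply/negP; rewrite -ltnNge; apply: proper_card.
apply/properP; split.
  apply/subsetP => z; rewrite !inE => /andP[-> /= lzy]; exact: lt_trans lzy ltym.
by exists y; rewrite !inE ?yQ ?ltym ?ltxx.
Qed.

Lemma solve n (Q : {set T}) : #|Q| = n -> forall g : T -> int,
  exists u : T -> int, forall x, x \in Q -> \sum_(y in Q | (x <= y)%O) u y = g x.
Proof.
elim: n Q => [|n IH] Q cQ g.
  by exists (fun _ => 0) => x xQ; move: cQ; rewrite (cardD1 x) xQ.
have [x0 x0Q] : exists x, x \in Q by apply/card_gt0P; rewrite cQ.
have := min_exists x0Q; case=> m [mQ mmin].
have cQ' : #|Q :\ m| = n by move: cQ; rewrite (cardsD1 m) mQ => -[].
have [u' hu'] := IH _ cQ' g.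
exists (fun y => if y == m then g m - \sum_(z in Q :\ m | (m <= z)%O) u' z else u' y).
move=> x xQ.
case: (eqVneq x m) => [->|nxm].
  rewrite (bigD1 m) /=; last by rewrite mQ le_refl.
  rewrite eqxx.
  rewrite [X in _ + X](eq_bigr u'); last by move=> z; case: (eqVneq z m) => // ->; rewrite ?eqxx ?andbF.
  rewrite [X in _ + X](eq_bigl (fun z => (z \in Q :\ m) && (m <= z)%O)); first by rewrite subrK.
  by move=> z; rewrite !inE; case: (z == m); rewrite ?andbF // andbT.
rewrite -(hu' x); last by rewrite !inE nxm.
rewrite (eq_bigr u'); last first.
  move=> z /andP[zQ lxz]; case: (eqVneq z m) => // zm.
  by move: lxz nxm; rewrite zm => /(mmin x xQ) ->; rewrite eqxx.
apply: eq_bigl => z; rewrite !inE; case: (eqVneq z m) => [->|]; rewrite ?andbT //=.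
case lxm: (x <= m)%O; rewrite ?andbF //.
by move: nxm; rewrite (mmin x xQ lxm) eqxx.
Qed.

Definition eqs (Q : {set T}) (u : T -> int) :=
  forall x, x \in Q -> \sum_(y in Q | (x <= y)%O) u y = 1.

Lemma sum_cond (Q : {set T}) (c : T -> bool) (F : T -> int) :
  \sum_(x in Q) ((c x)%:R * F x) = \sum_(x in Q | c x) F x.
Proof.
rewrite [RHS]big_mkcondr; apply: eq_bigr => x _.
by case: (c x); rewrite ?mul1r ?mul0r.
Qed.

Lemma zeta_unit (Q : {set T}) : zeta_mx Q \in unitmx.
Proof.
have hs : forall j : 'I_#|Q|, exists u : T -> int, forall x, x \in Q ->
    \sum_(y in Q | (x <= y)%O) u y = (x == enum_val j)%:R.
  by move=> j; apply: (solve (n := #|Q|)).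
pose F j := proj1_sig (constructive_indefinite_description _ (hs j)).
have hF j : forall x, x \in Q -> \sum_(y in Q | (x <= y)%O) F j y = (x == enum_val j)%:R.
  exact: (proj2_sig (constructive_indefinite_description _ (hs j))).
pose B : 'M[int]_#|Q| := \matrix_(i, j) F j (enum_val i).
suff ZB : zeta_mx Q *m B = 1%:M by case: (mulmx1_unit ZB).
apply/matrixP => i j; rewrite !mxE.
under eq_bigr do rewrite !mxE.
rewrite -(big_enum_val (fun y => ((enum_val i <= y)%O)%:R * F j y)) sum_cond.
by rewrite hF ?enum_valP // (inj_eq enum_val_inj).
Qed.

Lemma echi_sol (Q : {set T}) u : eqs Q u -> echi Q = \sum_(x in Q) u x.
Proof.
move=> hu.
pose U : 'cV[int]_#|Q| := \col_i u (enum_val i).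
have ZU : zeta_mx Q *m U = const_mx 1.
  apply/matrixP => i j; rewrite !mxE.
  under eq_bigr do rewrite !mxE.
  rewrite -(big_enum_val (fun y => ((enum_val i <= y)%O)%:R * u y)) sum_cond.
  by rewrite hu ?enum_valP.
have IU : invmx (zeta_mx Q) *m const_mx 1 = U by rewrite -ZU mulKmx // zeta_unit.
rewrite /echi (big_enum_val u).
apply: eq_bigr => i _.
have := congr1 (fun M : 'cV[int]_#|Q| => M i 0) IU; rewrite !mxE => <-.
by apply: eq_bigr => j _; rewrite mxE mulr1.
Qed.

Lemma eqs_up (R Q : {set T}) u : eqs R u -> Q \subset R ->
  (forall x y, x \in Q -> y \in R -> (x <= y)%O -> y \in Q) -> eqs Q u.
Proof.
move=> hR sQR up x xQ; rewrite -(hR x (subsetP sQR x xQ)).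
apply: eq_bigl => y; case lxy: (x <= y)%O; rewrite ?andbF ?andbT //.
apply/idP/idP; first exact: (subsetP sQR).
by move=> yR; apply: up xQ yR lxy.
Qed.

Lemma sum_remove (R : {set T}) x (P : pred T) (u : T -> int) : u x = 0 ->
  \sum_(y in R | P y) u y = \sum_(y in R :\ x | P y) u y.
Proof.
move=> ux; rewrite (bigID (pred1 x)) /= big1 ?add0r; last by move=> y /andP[_ /eqP->].
by apply: eq_bigl => y; rewrite !inE; case: (y == x); rewrite ?andbF ?andbT.
Qed.

Lemma reduce (R S : {set T}) : chi_reduces R S -> forall u, eqs R u ->
  (forall x, x \in R -> x \notin S -> u x = 0) /\ eqs S u.
Proof.
elim => [R' | R' x S' [xR chix] _ IH] u hu.
  by split => // y yR; rewrite yR.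
have ha : eqs (above R' x) u.
  apply: (eqs_up hu).
    by apply/subsetP => y; rewrite inE => /andP[].
  move=> y z; rewrite !inE => /andP[_ lxy] -> /= lyz; exact: lt_le_trans lxy lyz.
have s1 := echi_sol ha; rewrite chix in s1.
have ux : u x = 0.
  have := hu x xR; rewrite (bigD1 x) /=; last by rewrite xR le_refl.
  have -> : \sum_(i | (i \in R') && (x <= i)%O && (i != x)) u i =
            \sum_(i in above R' x) u i.
    apply: eq_bigl => y; rewrite inE lt_def.
    by case: (y \in R'); case: (y != x); case: (x <= y)%O.
  rewrite -s1 => h; have := congr1 (fun t => t - 1) h; rewrite addrK subrr.
  by [].
have hu' : eqs (R' :\ x) u.
  move=> z; rewrite inE => /andP[_ zR]; rewrite -(hu z zR).
  by rewrite (sum_remove R' (fun y => (z <= y)%O) ux).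
have [h1 h2] := IH u hu'.
split => // y yR yS; case: (eqVneq y x) => [->//|yx].
by apply: h1 => //; rewrite !inE yx yR.
Qed.

Lemma int_eq u (f : T -> int) : eqs [set: T] u ->
  euler_integral f = \sum_x f x * u x.
Proof.
move=> hu.
pose r := [seq (f x, [set y | (x <= y)%O]) | x <- enum T] ++
          [seq (- f x, [set y | (x < y)%O]) | x <- enum T].
have hrep : filter_rep f r.
  split.
    move=> p; rewrite mem_cat => /orP[] /mapP[x _ ->] y z /=; rewrite !inE.
      exact: le_trans.
    exact: lt_le_trans.
  move=> z; rewrite big_cat !big_map /= -big_split /=. rewrite -enumT big_enum /=.
  rewrite (bigD1 z) //= big1 ?addr0.
    by rewrite !inE le_refl ltxx mulr1 mulr0 addr0.
  move=> x xz; rewrite !inE lt_def eq_sym xz /=.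
  by rewrite mulNr addrN.
have := epsilon_spec (inhabits [::]) (filter_rep f) (ex_intro _ r hrep).
rewrite /euler_integral.
move: (epsilon _ _) => r0 [hf hv].
have ef : forall p, p \in r0 -> echi p.2 = \sum_x (x \in p.2)%:R * u x.
  move=> p /hf hQ.
  rewrite (echi_sol (Q := p.2) (u := u)); last first.
    apply: (eqs_up hu); first exact: subsetT.
    by move=> x y xQ _ lxy; apply: hQ xQ lxy.
  rewrite [LHS]big_mkcond; apply: eq_bigr => x _.
  by case: (x \in p.2); rewrite ?mul1r ?mul0r.
rewrite (eq_big_seq (fun p : int * {set T} => \sum_x p.1 * (x \in p.2)%:R * u x)); last first.
  by move=> p pr; rewrite ef // mulr_sumr; apply: eq_bigr => x _; rewrite mulrA.
rewrite exchange_big /=; apply: eq_bigr => x _.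
by rewrite hv mulr_suml.
Qed.

End Aux.

Theorem corollary4p2 (d : Order.disp_t) (T : finPOrderType d)
  (Pchi : {set T}) (h h' : T -> int) :
  chi_minimal_model Pchi ->
  (forall x, x \in Pchi -> h x = h' x) ->
  euler_integral h = euler_integral h'.
Proof.
move=> [hred _] hh.
have [u hu] := solve (erefl #|[set: T]|) (fun _ => 1).
have hu' : eqs [set: T] u by [].
have [h0 _] := reduce hred hu'.
rewrite !(int_eq _ hu'); apply: eq_bigr => x _.
case: (boolP (x \in Pchi)) => xP; first by rewrite hh.
by rewrite h0 ?mulr0 // inE.
Qed.
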